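(* Let $n>1$ and $m>1$ be integers and let $G$ be an $r$-regular bipartite graph of order $m$ (with $r\geq 1$). Then $\chi_{ld}(G[\overline{K_{n}}])=2$.
   Context: All graphs are finite, simple and undirected. For a graph $G=(V,E)$ of order $N$ without isolated vertices, a bijection $f\colon V\to\{1,2,\dots,N\}$ is a local distance antimagic labeling if $w(u)\neq w(v)$ for every edge $uv$, where $w(u)=\sum_{x\in N(u)}f(x)$ and $N(u)$ is the open neighborhood of $u$. $\chi_{ld}(G)$ is the minimum number of distinct weights over all local distance antimagic labelings of $G$. $\overline{K_n}$ is the edgeless graph on $n$ vertices. The lexicographic product $G[H]$ has vertex set $V(G)\times V(H)$, with $(g,h)$ adjacent to $(g',h')$ iff $gg'\in E(G)$, or $g=g'$ and $hh'\in E(H)$. *)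

(* Defs.v *)
From mathcomp Require Import all_boot.
Set Implicit Arguments. Unset Strict Implicit. Unset Printing Implicit Defensive.

(* A finite simple graph is a symmetric irreflexive relation on a finType. *)

Definition edgeless (n : nat) : rel 'I_n := fun _ _ => false.
Arguments edgeless n _ _ : clear implicits.

Definition lexprod (T U : finType) (eG : rel T) (eH : rel U) : rel (T * U) :=
  fun x y => eG x.1 y.1 || ((x.1 == y.1) && eH x.2 y.2).

Definition weight (V : finType) (adj : rel V) (f : V -> nat) (u : V) : nat :=
  \sum_(x | adj u x) f x.

(* A labeling is encoded as g : {ffun V -> 'I_#|V|}; the actual label of v is
   (g v).+1 in {1,...,N}.  Injectivity of g makes it a bijection onto {1..N}. *)
Definition label (V : finType) (g : {ffun V -> 'I_#|V|}) (v : V) : nat :=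
  (g v).+1.

Definition is_ld_antimagic (V : finType) (adj : rel V) (g : {ffun V -> 'I_#|V|}) : bool :=
  injectiveb g &&
  [forall u, forall v, adj u v ==> (weight adj (label g) u != weight adj (label g) v)].

Definition n_weights (V : finType) (adj : rel V) (g : {ffun V -> 'I_#|V|}) : nat :=
  size (undup [seq weight adj (label g) v | v : V]).

(* chi_ld: minimum number of distinct weights over all local distance antimagic
   labelings (the default #|V| is only used if no such labeling exists). *)
Definition chi_ld (V : finType) (adj : rel V) : nat :=
  \big[minn/#|V|]_(g : {ffun V -> 'I_#|V|} | is_ld_antimagic adj g) n_weights adj g.

Definition bipartite (T : finType) (e : rel T) : Prop :=
  exists c : T -> bool, forall u v, e u v -> c u != c v.

Definition regular (T : finType) (e : rel T) (r : nat) : Prop :=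
  forall v : T, #|[set u | e v u]| = r.

(* Main.v *)
Require Import Defs.
From mathcomp Require Import all_boot zify.
Set Implicit Arguments. Unset Strict Implicit. Unset Printing Implicit Defensive.
Definition pairv (k h : nat) (s : bool) (p : nat) :=
  if odd h then s*k + (k.-1 - p) else s*k + p.
Definition triv (k h : nat) (s : bool) (p : nat) :=
  if h == 0 then s*k+p else if h == 1 then (~~s)*k + p else 2*(k.-1-p) + s.
Definition piv (n k h : nat) (s : bool) (p : nat) :=
  if odd n then (if h < 3 then triv k h s p else pairv k (h-3) s p) else pairv k h s p.
Lemma piv_lt n k h s p : p < k -> piv n k h s p < 2*k.
Proof.
rewrite /piv /pairv /triv => pk.
repeat case: ifP => ?; case: s => /=; lia.
Qed.
Lemma piv_inj n k h s s' p p' : p < k -> p' < k ->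
  piv n k h s p = piv n k h s' p' -> s = s' /\ p = p'.
Proof.
rewrite /piv /pairv /triv => pk pk'.
repeat case: ifP => ?; case: s; case: s' => /=; lia.
Qed.
Definition Pi (n k : nat) (s : bool) :=
  if odd n then (3*k-2+s) + (n./2).-1*(2*s*k + k.-1) else (n./2)*(2*s*k+k.-1).
Lemma pair_sum k s p N : p < k ->
  \sum_(0 <= h < N.*2) pairv k h s p = N * (2*s*k + k.-1).
Proof.
move=> pk; elim: N => [|N IH]; first by rewrite big_geq.
rewrite doubleS !big_nat_recr //= IH /pairv /= odd_double /=.
case: s IH => /= _; lia.
Qed.

Lemma piv_sum n k s p : 1 < n -> 0 < k -> p < k ->
  \sum_(0 <= h < n) piv n k h s p = Pi n k s.
Proof.
move=> n1 k0 pk; rewrite /Pi.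
have hd := odd_double_half n.
have h1 : 1 <= n./2 by rewrite -[1]/(2./2) half_leq.
case on: (odd n); rewrite on /= in hd.
- set q := (n./2).-1.
  have nq : n = 3 + q.*2 by rewrite /q; lia.
  rewrite {1}nq (big_cat_nat (n:=3)) //=; 
  rewrite -{2}[3]add0n big_addn (addKn 3).
  have -> : \sum_(0 <= i < q.*2) piv n k (i + 3) s p = \sum_(0 <= i < q.*2) pairv k i s p.
    by apply: eq_bigr => i _; rewrite /piv on ltnNge leq_addl /= addnK.
  rewrite pair_sum // !big_nat_recr //= big_geq // /piv on /triv /=.
  case: s => /=; lia.
- rewrite -{1}hd add0n.
  have -> : \sum_(0 <= h < (n./2).*2) piv n k h s p = \sum_(0 <= h < (n./2).*2) pairv k h s p.
    by apply: eq_bigr => i _; rewrite /piv on.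
  by rewrite pair_sum.
Qed.
Lemma Pi_lt n k : 1 < n -> 0 < k -> Pi n k false < Pi n k true.
Proof.
move=> n1 k0; rewrite /Pi /=.
have h1 : 1 <= n./2 by rewrite -[1]/(2./2) half_leq.
case: (odd n).
- move: ((n./2).-1) => q; nia.
- move: (n./2) h1 => q; nia.
Qed.

Lemma sumb (T : finType) (P : pred T) : \sum_a (P a : nat) = #|P|.
Proof.
rewrite -sum1_card [RHS]big_mkcond /=; apply: eq_bigr => a _.
by rewrite unfold_in; case: (P a).
Qed.

Lemma card_sides (T : finType) (e : rel T) (c : T -> bool) r :
  symmetric e -> (forall u v, e u v -> c u != c v) -> regular e r -> 0 < r ->
  #|[pred x | c x]| = #|[pred x | ~~ c x]|.
Proof.
move=> sym bip reg r0.
have E : \sum_a \sum_u (c a && e a u : nat) = \sum_u \sum_a (c a && e a u : nat).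
  exact: exchange_big.
have L : \sum_a \sum_u (c a && e a u : nat) = r * #|[pred x | c x]|.
  rewrite -sumb big_distrr /=; apply: eq_bigr => a _.
  case ca: (c a) => /=; last by rewrite muln0 big1.
  by rewrite muln1 sumb -(reg a); apply: eq_card => x; rewrite inE.
have R : \sum_u \sum_a (c a && e a u : nat) = r * #|[pred x | ~~ c x]|.
  rewrite -sumb big_distrr /=; apply: eq_bigr => u _.
  case cu: (c u) => /=.
    rewrite muln0 big1 // => a _; case ca: (c a) => //=.
    case eau: (e a u) => //; have := bip _ _ eau; by rewrite ca cu.
  have regp v : #|[pred x | e v x]| = r.
    by rewrite -(reg v); apply: eq_card => x; rewrite inE.
  rewrite muln1 -(regp u) -sumb; apply: eq_bigr => a _ /=; rewrite sym.
  case eua: (e u a); last by rewrite andbF.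
  have := bip _ _ eua; rewrite cu andbT; by case: (c a).
by apply/eqP; rewrite -(eqn_pmul2l r0) -L E R.
Qed.

Lemma bigmin_le (I : eqType) (rr : seq I) (P : pred I) (F : I -> nat) x z :
  z \in rr -> P z -> \big[minn/x]_(i <- rr | P i) F i <= F z.
Proof.
elim: rr => // a rr IH; rewrite inE big_cons => /orP [/eqP <- -> | zr Pz].
  exact: geq_minl.
case: (P a); last exact: IH.
exact: leq_trans (geq_minr _ _) (IH zr Pz).
Qed.

Theorem mainTheorem6 (T : finType) (e : rel T) (n m r : nat) :
  1 < n -> 1 < m -> 1 <= r ->
  symmetric e -> irreflexive e ->
  #|T| = m -> bipartite e -> regular e r ->
  chi_ld (lexprod e (edgeless n)) = 2.
Proof.
move=> n1 m1 r1 sym irr cardT [c bip] reg.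
set k := #|[pred x | c x]|.
have kB : #|[pred x | ~~ c x]| = k by rewrite -(card_sides sym bip reg r1).
have cT : #|T| = k.*2.
  by rewrite -(cardC [pred x | c x]) -addnn; congr (_ + _); rewrite -kB; apply: eq_card.
have kside b : #|[pred x | c x == b]| = k.
  case: b; [rewrite /k|rewrite -kB]; apply: eq_card => x; rewrite !inE.
    by rewrite eqb_id.
  by rewrite eqbF_neg.
have k0 : 0 < k by move: m1; rewrite -cardT cT; lia.
pose p (g : T) := index g (enum [pred x | c x == c g]).
have pk g : p g < k.
  by rewrite -(kside (c g)) cardE index_mem mem_enum inE.
have pinj x y : c x = c y -> p x = p y -> x = y.
  rewrite /p => cxy; rewrite cxy => pxy.
  have Hx : x \in enum [pred z | c z == c y] by rewrite mem_enum inE cxy.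
  have Hy : y \in enum [pred z | c z == c y] by rewrite mem_enum inE.
  by rewrite -(nth_index x Hx) pxy (nth_index x Hy).
pose V := (T * 'I_n)%type.
have cV : #|{: V}| = k.*2 * n by rewrite card_prod card_ord cT.
pose lv (v : V) := v.2 * (2*k) + piv n k v.2 (c v.1) (p v.1).
have lvlt (v : V) : lv v < #|{: V}|.
  rewrite cV /lv; move: (piv_lt n v.2 (c v.1) (pk v.1)) (ltn_ord v.2).
  move: (piv n k v.2 (c v.1) (p v.1)) => a; move: (nat_of_ord v.2) => h; nia.
pose g : {ffun V -> 'I_#|{: V}|} := [ffun v => Ordinal (lvlt v)].
pose C := \sum_(h < n) h * (2*k).
pose alpha b := C + Pi n k b + n.
have colsum a : \sum_(h < n) label g (a, h) = alpha (c a).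
  rewrite /label /alpha; under eq_bigr => h _ do rewrite ffunE /= /lv /= -addn1.
  rewrite !big_split /= sum_nat_const card_ord muln1 -/C; congr (_ + _ + _).
  by rewrite -(big_mkord xpredT (fun h => piv n k h (c a) (p a))) piv_sum.
have Wgt u : weight (lexprod e (edgeless n)) (label g) u = r * alpha (~~ c u.1).
  rewrite /weight.
  transitivity (\sum_(a | e u.1 a) \sum_(h : 'I_n) label g (a,h)).
    rewrite pair_big_dep /=; apply: eq_big => [x|[a h] _] //=.
    by rewrite /lexprod /edgeless andbF orbF andbT.
  rewrite (eq_bigr (fun _ => alpha (~~ c u.1))); last first.
    move=> a ea; rewrite colsum; congr alpha.
    by have := bip _ _ ea; case: (c a); case: (c u.1).
  rewrite (eq_bigl (fun a => a \in [set x | e u.1 x])); last by move=> a; rewrite inE.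
  by rewrite sum_nat_const reg.
have alpha_neq : alpha false != alpha true.
  by rewrite /alpha neq_ltn ltn_add2r ltn_add2l Pi_lt.
have ganti : is_ld_antimagic (lexprod e (edgeless n)) g.
  apply/andP; split.
    apply/injectiveP => x y; rewrite !ffunE => /(congr1 val) /=.
    rewrite /lv => H.
    have h2 : x.2 = y.2.
      apply: val_inj; have := congr1 (fun z => z %/ (2*k)) H => /=.
      have k2 : 0 < 2 * k by rewrite muln_gt0.
      rewrite !divnMDl // !divn_small ?addn0 //; exact: piv_lt.
    rewrite h2 in H; move/addnI: H => /piv_inj [] // cxy pxy.
    by case: x y h2 cxy pxy => [a h] [b h'] /= -> cxy pxy; rewrite (pinj a b).
  apply/forallP => u; apply/forallP => v; apply/implyP.
  rewrite /lexprod /edgeless andbF orbF => euv.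
  rewrite !Wgt eqn_pmul2l //.
  by have := bip _ _ euv; case: (c u.1); case: (c v.1) => //= _; rewrite eq_sym.
have ub : n_weights (lexprod e (edgeless n)) g <= 2.
  rewrite /n_weights.
  have -> : 2 = size [:: r * alpha true; r * alpha false] by [].
  apply: uniq_leq_size; first exact: undup_uniq.
  move=> x; rewrite mem_undup => /mapP [v _ ->]; rewrite Wgt !inE.
  by case: (c v.1); rewrite eqxx ?orbT.
have lb g' : is_ld_antimagic (lexprod e (edgeless n)) g' ->
    2 <= n_weights (lexprod e (edgeless n)) g'.
  case/andP => _ /forallP Hw.
  have [t0 _] : exists t0, t0 \in T by apply/card_gt0P; rewrite cT; lia.
  have [t1] : exists t1, t1 \in [set x | e t0 x] by apply/card_gt0P; rewrite reg.
  rewrite inE => e01.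
  have n0 : 0 < n by lia.
  pose u : V := (t0, Ordinal n0); pose v : V := (t1, Ordinal n0).
  have := forallP (Hw u) v; rewrite {1}/lexprod /= e01 /= => Hne.
  rewrite /n_weights.
  have -> : 2 = size [:: weight (lexprod e (edgeless n)) (label g') u;
                        weight (lexprod e (edgeless n)) (label g') v] by [].
  apply: uniq_leq_size; first by rewrite /= inE Hne.
  move=> x; rewrite !inE mem_undup => /orP [] /eqP ->; apply: map_f; exact: mem_enum.
rewrite /chi_ld; apply/eqP; rewrite eqn_leq; apply/andP; split.
  apply: leq_trans ub; apply: (@bigmin_le _ _ _ (n_weights (lexprod e (edgeless n))) _ g) => //; exact: mem_index_enum.
apply: (big_ind (fun x => 2 <= x)) => //.
  by rewrite cV; nia.
by move=> x y hx hy; rewrite leq_min hx hy.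
Qed.
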